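(* Let $x=(x_1^\top,\dots,x_m^\top)^\top\in\mathbb R^d$ with $x_i\in\mathbb R^{\bar d}$, and set $x_0=x_{m+1}=0\in\mathbb R^{\bar d}$. Then: (a) writing $\hat x=A^\top Ax=(\hat x_1^\top,\dots,\hat x_m^\top)^\top$ with $\hat x_i\in\mathbb R^{\bar d}$, we have $\mathrm{supp}(\hat x_i)\subset\mathrm{supp}(x_{i-1})\cup\mathrm{supp}(x_i)\cup\mathrm{supp}(x_{i+1})$ for all $i\in[1,m]$; (b) for any $\eta>0$, writing $\tilde x=\mathrm{prox}_{\eta g}(x)=(\tilde x_1^\top,\dots,\tilde x_m^\top)^\top$ with $\tilde x_i\in\mathbb R^{\bar d}$, we have $\mathrm{supp}(\tilde x_i)\subset\mathrm{supp}(x_{i-1})\cup\mathrm{supp}(x_i)\cup\mathrm{supp}(x_{i+1})$ for all $i\in[1,m]$.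
   Context: $\mathrm{supp}(z)=\{j:[z]_j\ne0\}$. Let $L_f>0$, $\beta>0$, integers $m_1\ge2$, $m_2\ge1$ with $m_1m_2$ even, $m=3m_1m_2$, $\bar d\ge5$ odd, $d=m\bar d$. $J_p\in\mathbb R^{(p-1)\times p}$ has $-1$ at $(k,k)$, $1$ at $(k,k+1)$, zero elsewhere. $\mathcal M=\{im_1:i=1,\dots,3m_2-1\}$, $\mathcal M^C=\{1,\dots,m-1\}\setminus\mathcal M$, $A=mL_f(J_{\mathcal M^C}\otimes I_{\bar d})$ with $J_{\mathcal M^C}$ the rows of $J_m$ indexed by $\mathcal M^C$. $g(x)=\beta\sum_{i\in\mathcal M}\|x_i-x_{i+1}\|_1$ and $\mathrm{prox}_{\eta g}(x)=\arg\min_{x'}\{g(x')+\frac1{2\eta}\|x'-x\|^2\}$. (In the paper $\beta$ additionally satisfies $\beta>(50\pi+1+\|A\|)\sqrt m\,\epsilon$ for a fixed $\epsilon\in(0,1)$.) *)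

(* Defs.v *)
From HB Require Import structures.
From mathcomp Require Import all_boot all_order all_algebra.
From mathcomp Require Import all_classical all_reals all_analysis.
From mathcomp Require Import mxtens.
Set Implicit Arguments. Unset Strict Implicit. Unset Printing Implicit Defensive.
Import Order.TTheory GRing.Theory Num.Theory.
Local Open Scope ring_scope.

Section Defs.
Variable R : realType.

Definition supp n (z : 'cV[R]_n) : {set 'I_n} := [set j | z j 0 != 0].

Definition norm2 n (z : 'cV[R]_n) : R := Num.sqrt (\sum_(j < n) z j 0 ^+ 2).
Definition norm1 n (z : 'cV[R]_n) : R := \sum_(j < n) `|z j 0|.

Definition opnorm p q (A : 'M[R]_(p, q)) : R :=
  sup [set r | exists v : 'cV[R]_q, norm2 v <= 1 /\ r = norm2 (A *m v)].

(* J_p in R^{(p-1) x p}: row k (1-based) has -1 at column k, +1 at column k+1.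
   Here with 0-based indices. *)
Definition Jmat p : 'M[R]_(p.-1, p) :=
  \matrix_(k < p.-1, j < p)
    (if val j == val k then -1 else if val j == (val k).+1 then 1 else 0).

(* M = { i*m1 : i = 1..3m2-1 } as a set of (0-based) row indices of J_m
   (row r : 'I_(m.-1) corresponds to the 1-based index r+1). *)
Definition Mset (m m1 m2 : nat) : {set 'I_(m.-1)} :=
  [set r : 'I_(m.-1) | [exists i : 'I_(3 * m2), (0 < val i)%N && (r.+1 == val i * m1)%N]].

Definition MCset (m m1 m2 : nat) : {set 'I_(m.-1)} := ~: Mset m m1 m2.

Definition JMC (m m1 m2 : nat) : 'M[R]_(#|MCset m m1 m2|, m) :=
  \matrix_(r, j) Jmat m (enum_val r) j.

Definition Amat (m m1 m2 dbar : nat) (Lf : R) :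
  'M[R]_(#|MCset m m1 m2| * dbar, m * dbar) :=
  (m%:R * Lf) *: tensmx (JMC m m1 m2) (1%:M : 'M[R]_dbar).

(* block x_i (1-based i) of x = (x_1^T,...,x_m^T)^T; x_0 = x_{m+1} = 0
   (and more generally x_i = 0 outside 1..m) *)
Definition blk (m dbar : nat) (x : 'cV[R]_(m * dbar)) (i : nat) : 'cV[R]_dbar :=
  match (if i is j.+1 then insub j else None) : option 'I_m with
  | Some k => \col_(a < dbar) x (mxtens_index (k, a)) 0
  | None => 0
  end.

Definition gfun (m m1 m2 dbar : nat) (beta : R) (x : 'cV[R]_(m * dbar)) : R :=
  beta * \sum_(r in Mset m m1 m2) norm1 (blk x (val r).+1 - blk x (val r).+2).

Definition is_prox (m m1 m2 dbar : nat) (beta eta : R) (x y : 'cV[R]_(m * dbar)) : Prop :=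
  forall y' : 'cV[R]_(m * dbar),
    gfun m1 m2 beta y + (2 * eta)^-1 * norm2 (y - x) ^+ 2
    <= gfun m1 m2 beta y' + (2 * eta)^-1 * norm2 (y' - x) ^+ 2.

End Defs.

Arguments Amat {R} m m1 m2 dbar Lf.
Arguments JMC {R} m m1 m2.
Arguments Mset m m1 m2.
Arguments MCset m m1 m2.

(* Main.v *)
Require Import Defs.
From HB Require Import structures.
From mathcomp Require Import all_boot all_order all_algebra.
From mathcomp Require Import all_classical all_reals all_analysis.
From mathcomp Require Import mxtens.
From mathcomp Require Import zify.
Import Order.TTheory GRing.Theory Num.Theory.
Local Open Scope ring_scope.

Section Helpers.
Variable R : realType.

Lemma blkE m d (x : 'cV[R]_(m * d)) (k : 'I_m) b :
  blk x k.+1 b 0 = x (mxtens_index (k, b)) 0.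
Proof.
rewrite /blk; case: insubP => [k' _ hk|]; last by rewrite ltn_ord.
rewrite mxE; congr (x _ 0); congr mxtens_index; congr (_, _); exact: val_inj.
Qed.

Lemma JmatNZ {p} {e : 'I_p.-1} {j : 'I_p} : Jmat R p e j != 0 ->
  (j = e :> nat) \/ (j = e.+1 :> nat).
Proof.
rewrite mxE; case: ifP => [/eqP ->|_]; first by left.
case: ifP => [/eqP ->|_]; first by right.
by rewrite eqxx.
Qed.

Lemma partA m m1 m2 d Lf (x : 'cV[R]_(m * d)) (k : 'I_m) a :
  (forall k' : 'I_m, (k'.+1 = k \/ k' = k :> nat \/ k' = k.+1 :> nat) ->
       x (mxtens_index (k', a)) 0 = 0) ->
  ((Amat m m1 m2 d Lf)^T *m Amat m m1 m2 d Lf *m x) (mxtens_index (k, a)) 0 = 0.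
Proof.
move=> hx; rewrite -mulmxA mxE big1 // => r _.
case: (mxtens_indexP r) => e c.
rewrite mxE /Amat mxE tensmxE.
rewrite (_ : JMC m m1 m2 e k = Jmat R m (enum_val e) k); last by rewrite mxE.
have [Jz|Jnz] := eqVneq (Jmat R m (enum_val e) k) 0.
  by rewrite Jz !mul0r mulr0 mul0r.
have [ca|cna] := eqVneq c a; last by rewrite (_ : (1%:M : 'M[R]_d) c a = 0) ?mulr0 ?mul0r // mxE (negbTE cna).
subst c.
rewrite [X in _ * X]mxE big1 ?mulr0 // => idx _.
case: (mxtens_indexP idx) => k' b.
rewrite mxE tensmxE.
rewrite (_ : JMC m m1 m2 e k' = Jmat R m (enum_val e) k'); last by rewrite mxE.
have [Jz'|Jnz'] := eqVneq (Jmat R m (enum_val e) k') 0.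
  by rewrite Jz' !mul0r mulr0 mul0r.
have [ab|anb] := eqVneq a b; last by rewrite (_ : (1%:M : 'M[R]_d) a b = 0) ?mulr0 ?mul0r // mxE (negbTE anb).
subst b; rewrite hx ?mulr0 //.
case: (JmatNZ Jnz) => h1; case: (JmatNZ Jnz') => h2; move: h1 h2; move: (nat_of_ord k) (nat_of_ord k') (nat_of_ord (enum_val e)) => u v w h1 h2; lia.
Qed.

Definition cpl m m1 m2 (k : nat) : bool :=
  [exists r : 'I_(m.-1), (r \in Mset m m1 m2) && (r.+1 == k)%N].

Lemma nocons m m1 m2 k : (2 <= m1)%N -> cpl m m1 m2 k -> cpl m m1 m2 k.+1 -> False.
Proof.
move=> hm1 /existsP [r /andP [hr /eqP hrk]] /existsP [r' /andP [hr' /eqP hrk']].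
move: hr hr'; rewrite !inE => /existsP [i /andP [_ /eqP hi]] /existsP [i' /andP [_ /eqP hi']].
have hi2 : r.+1 = (i * m1)%N := hi.
have hi2' : r'.+1 = (i' * m1)%N := hi'.
have h : (i' * m1 = i * m1 + 1)%N by lia.
case: (leqP i' i) => hii.
  have : (i' * m1 <= i * m1)%N by rewrite leq_mul2r hii orbT.
  lia.
have : (i.+1 * m1 <= i' * m1)%N by rewrite leq_mul2r hii orbT.
rewrite mulSn; lia.
Qed.

Arguments nocons {m m1 m2 k}.

Definition Zs m m1 m2 (i j : nat) : bool :=
  (j == i) || (j == i.-1) && cpl m m1 m2 j || (j == i.+1) && cpl m m1 m2 i.

Lemma Zclosed m m1 m2 i j : (2 <= m1)%N -> (0 < i)%N -> (0 < j)%N -> cpl m m1 m2 j ->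
  Zs m m1 m2 i j = Zs m m1 m2 i j.+1.
Proof.
move=> hm1 hi hj cj.
have n1 : cpl m m1 m2 j.+1 = false.
  by apply/negbTE/negP => c1; exact: (nocons hm1 cj c1).
have n2 : cpl m m1 m2 j.-1 = false.
  apply/negbTE/negP => c1; apply: (nocons hm1 c1); by rewrite prednK.
rewrite /Zs n1 cj.
have [->|hne] := eqVneq i j; first by rewrite ?cj; lia.
have hc : i = j.-1 -> cpl m m1 m2 i = false by move=> ->.
have hne2 : i <> j by apply/eqP.
move: hc hne2; case: (cpl m m1 m2 i) => hc hne'.
  have : i <> j.-1 by move=> /hc.
  lia.
lia.
Qed.

Arguments Zclosed {m m1 m2 i j}.

Lemma nb3 m d (x : 'cV[R]_(m * d)) (i : nat) a :
  blk x i.-1 a 0 = 0 -> blk x i a 0 = 0 -> blk x i.+1 a 0 = 0 ->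
  forall j : nat, (j = i.-1 \/ j = i \/ j = i.+1) -> blk x j a 0 = 0.
Proof. by move=> h0 h1 h2 j [->|[->|->]]. Qed.

Arguments nb3 {m d x i a}.

Lemma getk m i : (1 <= i <= m)%N -> exists k : 'I_m, i = k.+1.
Proof.
move=> /andP [h1 h2]; have hk : (i.-1 < m)%N by lia.
by exists (Ordinal hk) => /=; lia.
Qed.

End Helpers.

Theorem lemma8 (R : realType) (Lf beta eps : R) (m1 m2 m dbar : nat)
  (hLf : 0 < Lf) (hbeta : 0 < beta)
  (hm1 : (2 <= m1)%N) (hm2 : (1 <= m2)%N) (hev : ~~ odd (m1 * m2))
  (hm : m = (3 * m1 * m2)%N)
  (hdbar5 : (5 <= dbar)%N) (hdbarodd : odd dbar)
  (heps : 0 < eps < 1)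
  (hbeta_eps : beta > (50 * pi + 1 + opnorm (Amat m m1 m2 dbar Lf))
                        * Num.sqrt (m%:R) * eps)
  (x : 'cV[R]_(m * dbar)) :
  (forall i : nat, (1 <= i <= m)%N ->
     supp (blk ((Amat m m1 m2 dbar Lf)^T *m (Amat m m1 m2 dbar Lf) *m x) i)
       \subset supp (blk x i.-1) :|: supp (blk x i) :|: supp (blk x i.+1))
  /\
  (forall eta : R, 0 < eta ->
   forall xt : 'cV[R]_(m * dbar), is_prox m1 m2 beta eta x xt ->
   forall i : nat, (1 <= i <= m)%N ->
     supp (blk xt i)
       \subset supp (blk x i.-1) :|: supp (blk x i) :|: supp (blk x i.+1)).
Proof.
split.
  move=> i /getk [k ->]; apply/fintype.subsetP => a; rewrite !inE => ha.
  apply/negPn/negP; rewrite !negb_or => /andP [/andP [/negbNE/eqP h0 /negbNE/eqP h1] /negbNE/eqP h2].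
  move: ha; rewrite blkE partA ?eqxx //.
  move=> k' hk'; rewrite -blkE; apply: (@nb3 R _ _ _ _ _ h0 h1 h2) => /=; lia.
move=> eta heta xt hprox i /getk [k ->]; apply/fintype.subsetP => a; rewrite !inE => ha.
apply/negPn/negP; rewrite !negb_or => /andP [/andP [/negbNE/eqP h0 /negbNE/eqP h1] /negbNE/eqP h2].
pose Z := Zs m m1 m2 k.+1.
pose y : 'cV[R]_(m * dbar) := \col_idx (if ((mxtens_unindex idx).2 == a) && Z (mxtens_unindex idx).1.+1
   then 0 else xt idx 0).
have hy : forall j b, blk y j b 0 = if (b == a) && Z j then 0 else blk xt j b 0.
  move=> j b; case: j => [|j]; first by rewrite /blk /= !mxE if_same.
  rewrite /blk; case: insubP => [k' _ hk|_]; last by rewrite !mxE if_same.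
  by rewrite !mxE mxtens_indexK /= hk.
have hZx : forall j, Z j -> blk x j a 0 = 0.
  move=> j; rewrite /Z /Zs => /orP [/orP [/eqP ->| /andP [/eqP -> _]] | /andP [/eqP -> _]] //.
have hg : gfun m1 m2 beta y <= gfun m1 m2 beta xt.
  rewrite /gfun; apply: ler_wpM2l; first exact: ltW.
  apply: ler_sum => r hr; rewrite /norm1.
  apply: ler_sum => b _; rewrite !mxE !hy.
  have cj : cpl m m1 m2 r.+1 by apply/existsP; exists r; rewrite hr eqxx.
  rewrite /Z (_ : \val r = nat_of_ord r) // -(@Zclosed m m1 m2 k.+1 r.+1 hm1 _ _ cj) //.
  by case: (_ && _); rewrite ?subrr ?normr0 ?normr_ge0.
have hq : norm2 (y - x) ^+ 2 < norm2 (xt - x) ^+ 2.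
  rewrite /norm2 !sqr_sqrtr ?sumr_ge0 // => [|*|*]; last 2 first.
    exact: sqr_ge0.
    exact: sqr_ge0.
  pose idx0 := mxtens_index (k, a).
  rewrite (bigD1 idx0) //= [X in _ < X](bigD1 idx0) //=.
  apply: ltr_leD.
    rewrite !mxE mxtens_indexK /=.
    have -> : Z k.+1 by rewrite /Z /Zs eqxx.
    have hx0 : x idx0 0 = 0 by rewrite /idx0 -blkE.
    have hxt0 : xt idx0 0 != 0 by rewrite /idx0 -blkE.
    rewrite eqxx /= hx0 !subr0 expr0n /=.
    by rewrite lt_def sqr_ge0 sqrf_eq0 hxt0.
  apply: ler_sum => idx _; case: (mxtens_indexP idx) => k' b.
  rewrite !mxE mxtens_indexK /=; case: ifP => [/andP [/eqP -> hz] | _] //.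
  rewrite -blkE hZx // !subr0 expr0n /=.
  exact: sqr_ge0.
have hc : 0 < (2 * eta)^-1 by rewrite invr_gt0 mulr_gt0.
have := hprox y; rewrite leNgt => /negP; apply.
by apply: ler_ltD => //; rewrite ltr_pM2l.
Qed.
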